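(* Let $m_1,m_2,c_1,c_2,k_1,k_2>0$ and put $m=m_1+m_2$, $c=c_1+c_2$, $k=k_1+k_2$. Consider the switched system on $\mathbb{R}^4$ with state $x=(x_1,x_2,x_3,x_4)$, given by $E_{\sigma(t)}\dot x=A_{\sigma(t)}x$ with $\sigma(t)\in\{1,2\}$ and $$E_1=\mathrm{diag}(1,m_1,1,m_2),\quad A_1=\begin{bmatrix}0&1&0&0\\-k_1&-c_1&0&0\\0&0&0&1\\0&0&-k_2&-c_2\end{bmatrix},\quad E_2=\mathrm{diag}(1,m,1,0),\quad A_2=\begin{bmatrix}0&1&0&0\\-k&-c&0&0\\0&0&0&1\\-1&0&1&0\end{bmatrix},$$ with the following switching rules: a switch from mode 2 to mode 1 may occur at any time and then $x(t_*^+)=x(t_*^-)$; a switch from mode 1 to mode 2 at time $t_*$ may occur only if $x_1(t_*^-)=x_3(t_*^-)$, and then $x_1(t_*^+)=x_3(t_*^+)=x_1(t_*^-)$ and $x_2(t_*^+)=x_4(t_*^+)=\frac{m_1x_2(t_*^-)+m_2x_4(t_*^-)}{m}$. Then this switched system is globally uniformly exponentially stable about zero.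
   Context: This models two spring–mass–damper systems (masses $m_1,m_2$, damping $c_1,c_2$, stiffness $k_1,k_2$, displacements $x_1=q_1$, $x_3=q_2$, velocities $x_2,x_4$) that may lock together (mode 2) with conservation of momentum at lock-up, or move independently (mode 1). Switched descriptor system: the switching signal $\sigma$ is piecewise constant with finitely many discontinuities in every bounded interval; a solution $x(\cdot)$ is differentiable and satisfies $E_{\sigma(t)}\dot x(t)=A_{\sigma(t)}x(t)$ at every $t$ where $\sigma$ is continuous, with one-sided limits $x(t_*^\pm)$ at discontinuities of $\sigma$, where the stated switching rules hold (the differential equation is not required at switching instants). GUES means there exist $\beta,\alpha>0$ such that every solution satisfies $\|x(t)\|\le\beta e^{-\alpha(t-t_0)}\|x(t_0)\|$ for all $t\ge t_0$. *)

(* Defs.v *)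
From Stdlib Require Import Reals Lra.
Open Scope R_scope.

Inductive mode := M1 | M2.

(* States in R^4: functions nat -> R, only indices 0..3 are used
   (index 0,1,2,3 = paper's x1,x2,x3,x4). Matrices: nat -> nat -> R. *)
Definition vec := nat -> R.
Definition mat := nat -> nat -> R.

Definition mv (A : mat) (v : vec) (i : nat) : R :=
  sum_f_R0 (fun j => A i j * v j) 3.

Definition vnorm (v : vec) : R := sqrt (sum_f_R0 (fun j => (v j)^2) 3).

Record params := mkParams { m1 : R; m2 : R; c1 : R; c2 : R; k1 : R; k2 : R }.

Definition Emat (p : params) (s : mode) : mat :=
  fun i j =>
  match s with
  | M1 => match i, j with
          | 0%nat, 0%nat => 1 | 1%nat, 1%nat => m1 p
          | 2%nat, 2%nat => 1 | 3%nat, 3%nat => m2 p | _, _ => 0 end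
  | M2 => match i, j with
          | 0%nat, 0%nat => 1 | 1%nat, 1%nat => m1 p + m2 p
          | 2%nat, 2%nat => 1 | _, _ => 0 end
  end.

Definition Amat (p : params) (s : mode) : mat :=
  fun i j =>
  match s with
  | M1 => match i, j with
          | 0%nat, 1%nat => 1
          | 1%nat, 0%nat => - k1 p | 1%nat, 1%nat => - c1 p
          | 2%nat, 3%nat => 1
          | 3%nat, 2%nat => - k2 p | 3%nat, 3%nat => - c2 p
          | _, _ => 0 end
  | M2 => match i, j with
          | 0%nat, 1%nat => 1
          | 1%nat, 0%nat => - (k1 p + k2 p) | 1%nat, 1%nat => - (c1 p + c2 p)
          | 2%nat, 3%nat => 1
          | 3%nat, 0%nat => -1 | 3%nat, 2%nat => 1
          | _, _ => 0 end
  end.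

(* sigma is continuous (= locally constant, mode being discrete) at t *)
Definition sig_cont_at (sigma : R -> mode) (t : R) : Prop :=
  exists d, 0 < d /\ forall s, Rabs (s - t) < d -> sigma s = sigma t.

Definition piecewise_constant (sigma : R -> mode) : Prop :=
  forall a b, exists l : list R,
    forall t, a <= t <= b -> ~ List.In t l -> sig_cont_at sigma t.

Definition left_lim (f : R -> R) (t l : R) : Prop :=
  forall eps, 0 < eps -> exists d, 0 < d /\
    forall s, t - d < s < t -> Rabs (f s - l) < eps.
Definition right_lim (f : R -> R) (t l : R) : Prop :=
  forall eps, 0 < eps -> exists d, 0 < d /\
    forall s, t < s < t + d -> Rabs (f s - l) < eps.

(* switching rules at a discontinuity t of sigma, with left mode i,
   right mode j, left limit xm and right limit xp *)
Definition switch_rule (p : params) (i j : mode) (xm xp : vec) : Prop :=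
  match i, j with
  | M1, M2 => xm 0%nat = xm 2%nat /\
              xp 0%nat = xm 0%nat /\ xp 2%nat = xm 0%nat /\
              xp 1%nat = (m1 p * xm 1%nat + m2 p * xm 3%nat) / (m1 p + m2 p) /\
              xp 3%nat = (m1 p * xm 1%nat + m2 p * xm 3%nat) / (m1 p + m2 p)
  | _, _ => forall k, (k < 4)%nat -> xp k = xm k
  end.

(* x : R -> vec is a solution on [t0, +oo) for the switching signal sigma.
   Convention: x is right-continuous (x(t) = x(t^+)) at t0 and at switching instants. *)
Definition is_solution (p : params) (sigma : R -> mode) (t0 : R) (x : R -> vec) : Prop :=
  (forall k, (k < 4)%nat -> right_lim (fun s => x s k) t0 (x t0 k)) /\
  (forall t, t0 < t -> sig_cont_at sigma t ->
     exists dx : vec,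
       (forall k, (k < 4)%nat -> derivable_pt_lim (fun s => x s k) t (dx k)) /\
       (forall i, (i < 4)%nat ->
          mv (Emat p (sigma t)) dx i = mv (Amat p (sigma t)) (x t) i)) /\
  (forall t, t0 < t -> ~ sig_cont_at sigma t ->
     exists (d : R) (i j : mode) (xm : vec),
       0 < d /\
       (forall s, t - d < s < t -> sigma s = i) /\
       (forall s, t < s < t + d -> sigma s = j) /\
       (forall k, (k < 4)%nat -> left_lim (fun s => x s k) t (xm k)) /\
       (forall k, (k < 4)%nat -> right_lim (fun s => x s k) t (x t k)) /\
       switch_rule p i j xm (x t)).

Definition GUES (p : params) : Prop :=
  exists beta alpha, 0 < beta /\ 0 < alpha /\
    forall sigma, piecewise_constant sigma ->
    forall t0 (x : R -> vec), is_solution p sigma t0 x ->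
    forall t, t0 <= t -> vnorm (x t) <= beta * exp (- alpha * (t - t0)) * vnorm (x t0).

(* Main.v *)
Require Import Defs.
From Stdlib Require Import Reals Lra Lia Psatz List Classical.
From Coquelicot Require Import Coquelicot.
Import Defs.
Open Scope R_scope.


Definition nlim (N : R -> R -> Prop) (f : R -> R) (l : R) :=
  forall eps, 0 < eps -> exists d, 0 < d /\ forall s, N d s -> Rabs (f s - l) < eps.

Definition Nmono (N : R -> R -> Prop) := forall d1 d2 s, d1 <= d2 -> N d1 s -> N d2 s.

Lemma nlim_const N c : nlim N (fun _ => c) c.
Proof. intros e He; exists 1; split; [lra|]; intros; rewrite Rminus_diag, Rabs_R0; lra. Qed.

Lemma nlim_plus N f g a b : Nmono N -> nlim N f a -> nlim N g b ->
  nlim N (fun s => f s + g s) (a + b).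
Proof.
  intros HN Hf Hg e He.
  destruct (Hf (e/2)) as [d1 [Hd1 H1]]; [lra|].
  destruct (Hg (e/2)) as [d2 [Hd2 H2]]; [lra|].
  exists (Rmin d1 d2); split; [apply Rmin_pos; lra|].
  intros s Hs.
  specialize (H1 s (HN _ _ _ (Rmin_l _ _) Hs)).
  specialize (H2 s (HN _ _ _ (Rmin_r _ _) Hs)).
  replace (f s + g s - (a + b)) with ((f s - a) + (g s - b)) by ring.
  eapply Rle_lt_trans; [apply Rabs_triang|]; lra.
Qed.

Lemma nlim_mult N f g a b : Nmono N -> nlim N f a -> nlim N g b ->
  nlim N (fun s => f s * g s) (a * b).
Proof.
  intros HN Hf Hg e He.
  assert (Hb : 0 < Rabs b + 1) by (pose proof (Rabs_pos b); lra).
  assert (Ha : 0 < Rabs a + 1) by (pose proof (Rabs_pos a); lra).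
  destruct (Hf (e/2/(Rabs b + 1))) as [d1 [Hd1 H1]].
  { apply Rdiv_lt_0_compat; lra. }
  destruct (Hg (Rmin 1 (e/2/(Rabs a + 1)))) as [d2 [Hd2 H2]].
  { apply Rmin_pos; [lra| apply Rdiv_lt_0_compat; lra]. }
  exists (Rmin d1 d2); split; [apply Rmin_pos; lra|].
  intros s Hs.
  specialize (H1 s (HN _ _ _ (Rmin_l _ _) Hs)).
  specialize (H2 s (HN _ _ _ (Rmin_r _ _) Hs)).
  assert (H2a : Rabs (g s - b) < 1) by (eapply Rlt_le_trans; [apply H2| apply Rmin_l]).
  assert (H2b : Rabs (g s - b) < e/2/(Rabs a + 1)) by (eapply Rlt_le_trans; [apply H2| apply Rmin_r]).
  replace (f s * g s - a * b) with ((f s - a) * g s + a * (g s - b)) by ring.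
  eapply Rle_lt_trans; [apply Rabs_triang|]. rewrite !Rabs_mult.
  assert (Hgs : Rabs (g s) <= Rabs b + 1).
  { replace (g s) with ((g s - b) + b) by ring.
    eapply Rle_trans; [apply Rabs_triang|]; lra. }
  assert (E1 : Rabs (f s - a) * Rabs (g s) <= e/2).
  { apply Rle_trans with (Rabs (f s - a) * (Rabs b + 1)).
    - apply Rmult_le_compat_l; [apply Rabs_pos|lra].
    - apply (Rmult_lt_compat_r (Rabs b + 1)) in H1; [|lra].
      unfold Rdiv in H1. rewrite Rmult_assoc, Rinv_l in H1; lra. }
  assert (E2 : Rabs a * Rabs (g s - b) < e/2).
  { apply Rle_lt_trans with ((Rabs a + 1) * Rabs (g s - b)).
    - apply Rmult_le_compat_r; [apply Rabs_pos|lra].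
    - apply (Rmult_lt_compat_l (Rabs a + 1)) in H2b; [|lra].
      unfold Rdiv in H2b. rewrite (Rmult_comm (e/2)), <- Rmult_assoc, Rinv_r in H2b; lra. }
  lra.
Qed.

Lemma nlim_cont N h t : (forall d s, N d s -> Rabs (s - t) < d) -> continuity_pt h t ->
  nlim N h (h t).
Proof.
  intros HN Hc e He.
  destruct (Hc e He) as [d [Hd H]].
  exists d; split; [lra|]. intros s Hs.
  destruct (Req_dec s t) as [->|Hst].
  - rewrite Rminus_diag, Rabs_R0; lra.
  - apply (H s). split; [split; [exact I| auto]|]. apply HN in Hs. exact Hs.
Qed.

Definition Nr t := fun d s => t < s < t + d.
Definition Nl t := fun d s => t - d < s < t.
Lemma Nr_mono t : Nmono (Nr t). Proof. unfold Nmono, Nr; intros; lra. Qed.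
Lemma Nl_mono t : Nmono (Nl t). Proof. unfold Nmono, Nl; intros; lra. Qed.
Lemma Nr_ball t d s : Nr t d s -> Rabs (s - t) < d.
Proof. unfold Nr; intros; rewrite Rabs_right; lra. Qed.
Lemma Nl_ball t d s : Nl t d s -> Rabs (s - t) < d.
Proof. unfold Nl; intros; rewrite Rabs_left; lra. Qed.


Lemma mono_open f s t : (forall u, s<u<t -> exists df, derivable_pt_lim f u df /\ df <= 0) ->
  forall a b, s<a -> a<b -> b<t -> f b <= f a.
Proof.
  intros H a b H1 H2 H3.
  destruct (MVT_gen f a b (Derive f)) as [c [Hc Heq]].
  - intros x Hx. rewrite Rmin_left in Hx by lra. rewrite Rmax_right in Hx by lra.
    destruct (H x) as [df [Hd _]]; [lra|].
    apply is_derive_Reals in Hd. rewrite (is_derive_unique _ _ _ Hd). exact Hd.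
  - intros x Hx. rewrite Rmin_left in Hx by lra. rewrite Rmax_right in Hx by lra.
    destruct (H x) as [df [Hd _]]; [lra|].
    apply derivable_continuous_pt. exists df; exact Hd.
  - rewrite Rmin_left in Hc by lra. rewrite Rmax_right in Hc by lra.
    destruct (H c) as [df [Hd Hle]]; [lra|].
    apply is_derive_Reals in Hd. rewrite (is_derive_unique _ _ _ Hd) in Heq.
    assert (df * (b - a) <= 0).
    { apply Rmult_le_0_r; lra. }
    lra.
Qed.

Lemma core f s t : s < t -> nlim (Nr s) f (f s) ->
  (exists L, nlim (Nl t) f L /\ f t <= L) ->
  (forall a b, s<a -> a<b -> b<t -> f b <= f a) -> f t <= f s.
Proof.
  intros Hst Hr [L [Hl HL]] Hm.
  destruct (Rle_or_lt (f t) (f s)) as [|Hlt]; [auto|exfalso].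
  set (eta := (f t - f s)/2).
  destruct (Hr eta) as [d1 [Hd1 H1]]; [unfold eta; lra|].
  destruct (Hl eta) as [d2 [Hd2 H2]]; [unfold eta; lra|].
  set (h := Rmin (Rmin d1 d2) (t - s) / 3).
  assert (Hm0 : 0 < Rmin (Rmin d1 d2) (t - s)) by (repeat apply Rmin_pos; lra).
  assert (Hh : 0 < h) by (unfold h; lra).
  assert (Hh1 : h < d1) by (unfold h; pose proof (Rmin_l (Rmin d1 d2) (t-s)); pose proof (Rmin_l d1 d2); lra).
  assert (Hh2 : h < d2) by (unfold h; pose proof (Rmin_l (Rmin d1 d2) (t-s)); pose proof (Rmin_r d1 d2); lra).
  assert (Hh3 : 3 * h <= t - s) by (unfold h; pose proof (Rmin_r (Rmin d1 d2) (t-s)); lra).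
  specialize (H1 (s + h)). specialize (H2 (t - h)).
  unfold Nr, Nl in *.
  assert (A1 := H1 ltac:(lra)). assert (A2 := H2 ltac:(lra)).
  assert (M := Hm (s+h) (t-h) ltac:(lra) ltac:(lra) ltac:(lra)).
  apply Rabs_def2 in A1. apply Rabs_def2 in A2. unfold eta in *. lra.
Qed.

Lemma mono_list (C : R -> Prop) (f : R -> R) (t0 : R)
 (Hr : forall u, t0 <= u -> nlim (Nr u) f (f u))
 (Hl : forall u, t0 < u -> exists L, nlim (Nl u) f L /\ f u <= L)
 (Hd : forall u, t0 < u -> C u -> exists df, derivable_pt_lim f u df /\ df <= 0)
 n : forall l : list R, (length l <= n)%nat -> forall s t, t0 <= s -> s < t ->
  (forall u, s < u < t -> ~ In u l -> C u) -> f t <= f s.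
Proof.
  induction n as [|n IH]; intros l Hlen s t Hs Hst HC.
  - destruct l; [|simpl in Hlen; lia].
    apply core; auto.
    + apply Hl; lra.
    + apply (mono_open f s t). intros u Hu. apply Hd; [lra|]. apply HC; auto.
  - destruct (classic (exists p, In p l /\ s < p < t)) as [[p [Hp Hpr]]|Hno].
    + set (l' := remove Req_EM_T p l).
      assert (Hl' : (length l' <= n)%nat).
      { pose proof (remove_length_lt Req_EM_T l p Hp). unfold l'. lia. }
      apply Rle_trans with (f p).
      * apply (IH l' Hl' p t); try lra.
        intros u Hu Hn. apply HC; [lra|]. intro Hin. apply Hn. apply in_in_remove; auto; lra.
      * apply (IH l' Hl' s p); try lra.
        intros u Hu Hn. apply HC; [lra|]. intro Hin. apply Hn. apply in_in_remove; auto; lra.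
    + apply core; auto.
      * apply Hl; lra.
      * apply (mono_open f s t). intros u Hu. apply Hd; [lra|]. apply HC; auto.
        intro Hin. apply Hno. exists u; auto.
Qed.

Definition Vo (M K e q v : R) := /2 * (K*(q*q) + M*(v*v)) + e*(M*(q*v)).

Lemma osc_lower M K e q v : 0 < M -> 0 < K -> 0 < e -> e <= 1 -> 4*e*M <= K ->
  /4 * (K*(q*q) + M*(v*v)) <= Vo M K e q v.
Proof.
  intros HM HK He He1 HeK. unfold Vo.
  assert (He2 : 4*(e*e)*M <= K) by nra.
  assert (0 <= K*(q*q) + M*(v*v) + 4*e*M*(q*v)).
  { assert (0 <= K * (K*(q*q) + M*(v*v) + 4*e*M*(q*v))).
    { replace (K * (K*(q*q) + M*(v*v) + 4*e*M*(q*v))) with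
        ((K*q + 2*e*M*v)^2 + M*(K - 4*(e*e)*M)*(v*v)) by ring.
      assert (0 <= M*(K - 4*(e*e)*M)*(v*v)).
      { apply Rmult_le_pos; [apply Rmult_le_pos; lra| nra]. }
      match goal with |- 0 <= ?a ^ 2 + _ => pose proof (pow2_ge_0 a) end. lra. }
    nra. }
  lra.
Qed.

Lemma osc_upper M K e q v : 0 < M -> 0 < K -> 0 < e -> e <= 1 -> 4*e*M <= K ->
  Vo M K e q v <= 3/4 * (K*(q*q) + M*(v*v)).
Proof.
  intros HM HK He He1 HeK. unfold Vo.
  assert (He2 : 4*(e*e)*M <= K) by nra.
  assert (0 <= K*(q*q) + M*(v*v) - 4*e*M*(q*v)).
  { assert (0 <= K * (K*(q*q) + M*(v*v) - 4*e*M*(q*v))).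
    { replace (K * (K*(q*q) + M*(v*v) - 4*e*M*(q*v))) with
        ((K*q - 2*e*M*v)^2 + M*(K - 4*(e*e)*M)*(v*v)) by ring.
      assert (0 <= M*(K - 4*(e*e)*M)*(v*v)).
      { apply Rmult_le_pos; [apply Rmult_le_pos; lra| nra]. }
      match goal with |- 0 <= ?a ^ 2 + _ => pose proof (pow2_ge_0 a) end. lra. }
    nra. }
  lra.
Qed.

Lemma osc_deriv M C K e q v : 0 < M -> 0 < C -> 0 < K -> 0 < e -> e <= 1 ->
  4*e*M <= K -> 2*e*M <= C -> 2*e*C <= K ->
  K*q*v + v*(-K*q - C*v) + e*(M*(v*v) + q*(-K*q - C*v)) <= -(e/2) * Vo M K e q v.
Proof.
  intros HM HC HK He He1 HeK HeM HeC. unfold Vo.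
  set (A := C - 5/4*e*M). set (B := 3/4*e*K). set (D := e*C - e*e*M/2).
  assert (HA : 3/8*C <= A) by (unfold A; lra).
  assert (HD0 : 0 <= D) by (unfold D; nra).
  assert (HD1 : D <= e*C) by (unfold D; nra).
  assert (HAB : D*D <= 4*A*B).
  { apply Rle_trans with ((e*C)*(e*C)). { nra. }
    unfold B. assert (e*C*(e*C) <= e*C*(K/2)) by nra. nra. }
  assert (0 <= A*(v*v) + B*(q*q) + D*(q*v)).
  { assert (0 <= 4*A*(A*(v*v) + B*(q*q) + D*(q*v))).
    { replace (4*A*(A*(v*v) + B*(q*q) + D*(q*v))) with
        ((2*A*v + D*q)^2 + (4*A*B - D*D)*(q*q)) by ring.
      assert (0 <= (4*A*B - D*D)*(q*q)) by (apply Rmult_le_pos; nra).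
      match goal with |- 0 <= ?a ^ 2 + _ => pose proof (pow2_ge_0 a) end. lra. }
    nra. }
  unfold A, B, D in *. nra.
Qed.


Definition Wx (p : params) e (y : vec) :=
  Vo (m1 p) (k1 p) e (y 0%nat) (y 1%nat) + Vo (m2 p) (k2 p) e (y 2%nat) (y 3%nat).
Definition dWx (p : params) e (y dy : vec) :=
  (k1 p * y 0%nat * dy 0%nat + m1 p * y 1%nat * dy 1%nat
     + e * (m1 p * (dy 0%nat * y 1%nat + y 0%nat * dy 1%nat)))
  + (k2 p * y 2%nat * dy 2%nat + m2 p * y 3%nat * dy 3%nat
     + e * (m2 p * (dy 2%nat * y 3%nat + y 2%nat * dy 3%nat))).

Lemma W_lim p e N (x : R -> vec) (y : vec) : Nmono N ->
  (forall k, (k < 4)%nat -> nlim N (fun s => x s k) (y k)) ->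
  nlim N (fun s => Wx p e (x s)) (Wx p e y).
Proof.
  intros HN Hx. unfold Wx, Vo.
  repeat first [ match goal with |- nlim _ (fun s => x s ?k) _ => apply Hx; lia end
               | apply nlim_plus | apply nlim_mult | apply nlim_const | exact HN ].
Qed.

Lemma dplus f g t a b : derivable_pt_lim f t a -> derivable_pt_lim g t b ->
  derivable_pt_lim (fun s => f s + g s) t (a + b).
Proof. intros; apply (derivable_pt_lim_plus f g); auto. Qed.
Lemma dmult f g t a b : derivable_pt_lim f t a -> derivable_pt_lim g t b ->
  derivable_pt_lim (fun s => f s * g s) t (a * g t + f t * b).
Proof. intros; apply (derivable_pt_lim_mult f g); auto. Qed.
Lemma dconst c t : derivable_pt_lim (fun _ => c) t 0.
Proof. apply derivable_pt_lim_const. Qed.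
Lemma dval f t l l' : derivable_pt_lim f t l -> l = l' -> derivable_pt_lim f t l'.
Proof. intros H ->; auto. Qed.

Lemma W_der p e (x : R -> vec) u (dy : vec) :
  (forall k, (k < 4)%nat -> derivable_pt_lim (fun s => x s k) u (dy k)) ->
  derivable_pt_lim (fun s => Wx p e (x s)) u (dWx p e (x u) dy).
Proof.
  intros Hx. unfold Wx, Vo. eapply dval.
  { repeat first [ match goal with |- derivable_pt_lim (fun s => x s ?k) _ _ => apply Hx; lia end
               | apply dplus | apply dmult | apply dconst ]. }
  cbv beta. unfold dWx. field.
Qed.

Lemma exp_der g t0 u : derivable_pt_lim (fun s => exp (g*(s-t0))) u (exp (g*(u-t0)) * g).
Proof.
  assert (H : derivable_pt_lim (fun s => g*(s-t0)) u g).
  { eapply dval. { apply dmult; [apply dconst|]. apply (derivable_pt_lim_minus (fun s => s) (fun _ => t0)).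
      apply derivable_pt_lim_id. apply derivable_pt_lim_const. } cbv beta; ring. }
  apply (derivable_pt_lim_comp (fun s => g*(s-t0)) exp u g (exp (g*(u-t0)))) in H;
    [| apply derivable_pt_lim_exp].
  eapply dval; [exact H| ring].
Qed.

Lemma F_der p e g t0 (x : R -> vec) u (dy : vec) :
  (forall k, (k < 4)%nat -> derivable_pt_lim (fun s => x s k) u (dy k)) ->
  derivable_pt_lim (fun s => exp (g*(s-t0)) * Wx p e (x s)) u
    (exp (g*(u-t0)) * g * Wx p e (x u) + exp (g*(u-t0)) * dWx p e (x u) dy).
Proof.
  intros Hx. eapply dval; [apply dmult; [apply exp_der| apply W_der; auto]| cbv beta; ring].
Qed.

Lemma exp_lim N g t0 t : (forall d s, N d s -> Rabs (s - t) < d) ->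
  nlim N (fun s => exp (g*(s-t0))) (exp (g*(t-t0))).
Proof.
  intros HN. apply (nlim_cont N (fun s => exp (g*(s-t0))) t HN).
  apply derivable_continuous_pt. exists (exp (g*(t-t0)) * g). apply exp_der.
Qed.

Lemma F_lim p e g t0 N (x : R -> vec) (y : vec) t : Nmono N ->
  (forall d s, N d s -> Rabs (s - t) < d) ->
  (forall k, (k < 4)%nat -> nlim N (fun s => x s k) (y k)) ->
  nlim N (fun s => exp (g*(s-t0)) * Wx p e (x s)) (exp (g*(t-t0)) * Wx p e y).
Proof.
  intros HN Hb Hx. apply nlim_mult; auto. apply exp_lim; auto. apply W_lim; auto.
Qed.

Lemma mode1_eqs p (dx y : vec) :
  (forall i, (i < 4)%nat -> mv (Emat p M1) dx i = mv (Amat p M1) y i) ->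
  dx 0%nat = y 1%nat /\ m1 p * dx 1%nat = - k1 p * y 0%nat - c1 p * y 1%nat /\
  dx 2%nat = y 3%nat /\ m2 p * dx 3%nat = - k2 p * y 2%nat - c2 p * y 3%nat.
Proof.
  intros H. pose proof (H 0%nat ltac:(lia)). pose proof (H 1%nat ltac:(lia)).
  pose proof (H 2%nat ltac:(lia)). pose proof (H 3%nat ltac:(lia)).
  unfold mv, Emat, Amat in *; simpl in *. repeat split; lra.
Qed.

Lemma mode2_eqs p (dx y : vec) :
  (forall i, (i < 4)%nat -> mv (Emat p M2) dx i = mv (Amat p M2) y i) ->
  dx 0%nat = y 1%nat /\ (m1 p + m2 p) * dx 1%nat = - (k1 p + k2 p) * y 0%nat - (c1 p + c2 p) * y 1%nat /\
  dx 2%nat = y 3%nat /\ y 0%nat = y 2%nat.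
Proof.
  intros H. pose proof (H 0%nat ltac:(lia)). pose proof (H 1%nat ltac:(lia)).
  pose proof (H 2%nat ltac:(lia)). pose proof (H 3%nat ltac:(lia)).
  unfold mv, Emat, Amat in *; simpl in *. repeat split; lra.
Qed.

Lemma jump_W p e i j xm xp : 0 < m1 p -> 0 < m2 p ->
  switch_rule p i j xm xp -> Wx p e xp <= Wx p e xm.
Proof.
  intros Hm1 Hm2 Hs.
  destruct i, j; simpl in Hs;
  try (unfold Wx; rewrite !Hs by lia; lra).
  destruct Hs as [E0 [E1 [E2 [E3 E4]]]].
  unfold Wx, Vo. rewrite E1, E2, E3, E4, <- E0.
  set (m := m1 p + m2 p). set (a := xm 1%nat). set (b := xm 3%nat).
  set (v := (m1 p * a + m2 p * b) / m).
  assert (Hm : 0 < m) by (unfold m; lra).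
  assert (Hv : m * v = m1 p * a + m2 p * b) by (unfold v; field; lra).
  clearbody v.
  assert (Key : m1 p * (v*v) + m2 p * (v*v) <= m1 p * (a*a) + m2 p * (b*b)).
  { assert (m * (m1 p * (a*a) + m2 p * (b*b) - (m1 p * (v*v) + m2 p * (v*v))) = m1 p * m2 p * ((a-b)*(a-b))).
    { replace (m * (m1 p * (a*a) + m2 p * (b*b) - (m1 p * (v*v) + m2 p * (v*v)))) with
        (m * (m1 p * (a*a) + m2 p * (b*b)) - (m*v)*(m*v)) by (unfold m; ring).
      rewrite Hv. unfold m. ring. }
    assert (0 <= m1 p * m2 p * ((a-b)*(a-b))) by (apply Rmult_le_pos; [apply Rmult_le_pos; lra| pose proof (Rle_0_sqr (a-b)); unfold Rsqr in *; lra]).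
    nra. }
  assert (Hv2 : m1 p * (xm 0%nat * v) + m2 p * (xm 0%nat * v) = m1 p * (xm 0%nat * a) + m2 p * (xm 0%nat * b)).
  { replace (m1 p * (xm 0%nat * v) + m2 p * (xm 0%nat * v)) with (xm 0%nat * (m * v)) by (unfold m; ring).
    rewrite Hv. ring. }
  assert (Hv3 : e * (m1 p * (xm 0%nat * v) + m2 p * (xm 0%nat * v)) = e * (m1 p * (xm 0%nat * a) + m2 p * (xm 0%nat * b))) by (rewrite Hv2; auto).
  unfold a, b in *. lra.
Qed.

Lemma tri a b c : Rabs (a - c) <= Rabs (a - b) + Rabs (b - c).
Proof. replace (a - c) with ((a - b) + (b - c)) by ring. apply Rabs_triang. Qed.

Lemma dminus f g t a b : derivable_pt_lim f t a -> derivable_pt_lim g t b ->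
  derivable_pt_lim (fun s => f s - g s) t (a - b).
Proof. intros; apply (derivable_pt_lim_minus f g); auto. Qed.

Lemma zero_deriv g u l : derivable_pt_lim g u l ->
  (exists r, 0 < r /\ forall s, Rabs (s - u) < r -> g s = 0) -> l = 0.
Proof.
  intros Hd [r [Hr Hz]].
  destruct (Req_dec l 0) as [|Hl]; auto. exfalso.
  destruct (Hd (Rabs l)) as [del Hdel]; [apply Rabs_pos_lt; auto|].
  set (h := Rmin del r / 2).
  assert (Hm : 0 < Rmin del r) by (apply Rmin_pos; [apply cond_pos| lra]).
  assert (Hh : 0 < h) by (unfold h; lra).
  assert (Hh1 : h < del) by (unfold h; pose proof (Rmin_l del r); lra).
  assert (Hh2 : h < r) by (unfold h; pose proof (Rmin_r del r); lra).
  specialize (Hdel h ltac:(lra) ltac:(rewrite Rabs_right; lra)).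
  rewrite (Hz (u + h)), (Hz u) in Hdel.
  - replace ((0 - 0) / h - l) with (- l) in Hdel by (field; lra).
    rewrite Rabs_Ropp in Hdel. lra.
  - rewrite Rminus_diag, Rabs_R0; lra.
  - replace (u + h - u) with h by ring. rewrite Rabs_right; lra.
Qed.

Definition goodo M C K e := 4*e*M <= K /\ 2*e*M <= C /\ 2*e*C <= K.

Lemma osc_deriv' M C K e q v w : 0 < M -> 0 < C -> 0 < K -> 0 < e -> e <= 1 ->
  goodo M C K e -> w = -K*q - C*v ->
  K*q*v + v*w + e*(M*(v*v) + q*w) <= -(e/2) * Vo M K e q v.
Proof. intros HM HC HK He He1 [H1 [H2 H3]] ->. apply osc_deriv; auto. Qed.

Lemma deriv_point p e sigma t0 (x : R -> vec) u :
  0 < m1 p -> 0 < m2 p -> 0 < c1 p -> 0 < c2 p -> 0 < k1 p -> 0 < k2 p ->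
  0 < e -> e <= 1 -> goodo (m1 p) (c1 p) (k1 p) e -> goodo (m2 p) (c2 p) (k2 p) e ->
  goodo (m1 p + m2 p) (c1 p + c2 p) (k1 p + k2 p) e ->
  is_solution p sigma t0 x -> t0 < u -> sig_cont_at sigma u ->
  exists df, derivable_pt_lim (fun s => exp (e/2*(s-t0)) * Wx p e (x s)) u df /\ df <= 0.
Proof.
  intros Hm1 Hm2 Hc1 Hc2 Hk1 Hk2 He He1 G1 G2 G3 Hsol Hu Hc.
  destruct Hsol as [_ [Hder _]].
  destruct (Hder u Hu Hc) as [dx [Hdx Heq]].
  eexists. split. { apply F_der; eauto. }
  assert (Key : dWx p e (x u) dx <= -(e/2) * Wx p e (x u)).
  { destruct (sigma u) eqn:Hs.
    - destruct (mode1_eqs p dx (x u) Heq) as [E0 [E1 [E2 E3]]].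
      assert (E : dWx p e (x u) dx =
        (k1 p * x u 0%nat * x u 1%nat + x u 1%nat * (m1 p * dx 1%nat)
           + e * (m1 p * (x u 1%nat * x u 1%nat) + x u 0%nat * (m1 p * dx 1%nat)))
        + (k2 p * x u 2%nat * x u 3%nat + x u 3%nat * (m2 p * dx 3%nat)
           + e * (m2 p * (x u 3%nat * x u 3%nat) + x u 2%nat * (m2 p * dx 3%nat)))).
      { unfold dWx. rewrite E0, E2. ring. }
      rewrite E.
      pose proof (osc_deriv' (m1 p) (c1 p) (k1 p) e (x u 0%nat) (x u 1%nat) (m1 p * dx 1%nat)
                    Hm1 Hc1 Hk1 He He1 G1 ltac:(rewrite E1; ring)).
      pose proof (osc_deriv' (m2 p) (c2 p) (k2 p) e (x u 2%nat) (x u 3%nat) (m2 p * dx 3%nat)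
                    Hm2 Hc2 Hk2 He He1 G2 ltac:(rewrite E3; ring)).
      unfold Wx. lra.
    - destruct Hc as [d [Hd Hcd]].
      set (r := Rmin d (u - t0)).
      assert (Hr : 0 < r) by (apply Rmin_pos; lra).
      assert (HA : forall s, Rabs (s - u) < r -> x s 0%nat = x s 2%nat /\
                exists dx', (forall k, (k < 4)%nat -> derivable_pt_lim (fun s' => x s' k) s (dx' k)) /\
                   dx' 0%nat = x s 1%nat /\ dx' 2%nat = x s 3%nat).
      { intros s Hsu.
        assert (Hr1 : r <= d) by apply Rmin_l.
        assert (Hr2 : r <= u - t0) by apply Rmin_r.
        assert (Hst : t0 < s) by (apply Rabs_def2 in Hsu; lra).
        assert (Hsig : sigma s = M2) by (rewrite <- Hs; apply Hcd; lra).
        assert (Hcs : sig_cont_at sigma s).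
        { exists (r - Rabs (s - u)). split; [lra|]. intros s' Hs'.
          rewrite Hsig, <- Hs. apply Hcd. pose proof (tri s' s u). lra. }
        destruct (Hder s Hst Hcs) as [dx' [Hdx' Heq']].
        rewrite Hsig in Heq'.
        destruct (mode2_eqs p dx' (x s) Heq') as [F0 [F1 [F2 F3]]].
        split; auto. exists dx'; auto. }
      assert (HB : forall s, Rabs (s - u) < r -> x s 1%nat = x s 3%nat).
      { intros s Hsu. destruct (HA s Hsu) as [_ [dx' [Hd' [F0 F2]]]].
        assert (Z : dx' 0%nat - dx' 2%nat = 0).
        { apply (zero_deriv (fun s' => x s' 0%nat - x s' 2%nat) s).
          - apply dminus; apply Hd'; lia.
          - exists (r - Rabs (s - u)). split; [lra|]. intros s' Hs'.
            destruct (HA s') as [Q _]; [pose proof (tri s' s u); lra|]. lra. }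
        lra. }
      assert (Z : dx 1%nat - dx 3%nat = 0).
      { apply (zero_deriv (fun s' => x s' 1%nat - x s' 3%nat) u).
        - apply dminus; apply Hdx; lia.
        - exists r. split; [lra|]. intros s' Hs'. rewrite (HB s' Hs'). ring. }
      assert (Hu0 : Rabs (u - u) < r) by (rewrite Rminus_diag, Rabs_R0; lra).
      destruct (HA u Hu0) as [X02 _]. pose proof (HB u Hu0) as X13.
      destruct (mode2_eqs p dx (x u) Heq) as [E0 [E1 [E2 E3]]].
      assert (D13 : dx 3%nat = dx 1%nat) by lra.
      assert (E : dWx p e (x u) dx =
        (k1 p + k2 p) * x u 0%nat * x u 1%nat + x u 1%nat * ((m1 p + m2 p) * dx 1%nat)
          + e * ((m1 p + m2 p) * (x u 1%nat * x u 1%nat) + x u 0%nat * ((m1 p + m2 p) * dx 1%nat))).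
      { unfold dWx. rewrite E0, E2, D13, <- X02, <- X13. ring. }
      assert (W : Wx p e (x u) = Vo (m1 p + m2 p) (k1 p + k2 p) e (x u 0%nat) (x u 1%nat)).
      { unfold Wx, Vo. rewrite <- X02, <- X13. ring. }
      rewrite E, W.
      apply (osc_deriv' _ (c1 p + c2 p)); try lra; auto. }
  pose proof (exp_pos (e/2*(u-t0))) as Hex.
  assert (Hq : exp (e/2*(u-t0)) * (dWx p e (x u) dx + e/2 * Wx p e (x u)) <= exp (e/2*(u-t0)) * 0).
  { apply Rmult_le_compat_l; lra. }
  replace (exp (e / 2 * (u - t0)) * (e / 2) * Wx p e (x u) + exp (e / 2 * (u - t0)) * dWx p e (x u) dx)
    with (exp (e/2*(u-t0)) * (dWx p e (x u) dx + e/2 * Wx p e (x u))) by ring.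
  lra.
Qed.

Lemma le_div_mul a b e : 0 < a -> e <= b / a -> a * e <= b.
Proof. intros Ha H. apply (Rmult_le_compat_l a) in H; [|lra]. field_simplify in H; lra. Qed.

Lemma good_bound M C K : 0 < M -> 0 < C -> 0 < K ->
  exists b, 0 < b /\ forall e, e <= b -> goodo M C K e.
Proof.
  intros HM HC HK.
  exists (Rmin (K/(4*M)) (Rmin (C/(2*M)) (K/(2*C)))). split.
  { repeat apply Rmin_pos; apply Rdiv_lt_0_compat; lra. }
  intros e He.
  pose proof (Rmin_l (K/(4*M)) (Rmin (C/(2*M)) (K/(2*C)))).
  pose proof (Rmin_r (K/(4*M)) (Rmin (C/(2*M)) (K/(2*C)))).
  pose proof (Rmin_l (C/(2*M)) (K/(2*C))). pose proof (Rmin_r (C/(2*M)) (K/(2*C))).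
  unfold goodo. repeat split.
  - rewrite Rmult_assoc, (Rmult_comm e M), <- Rmult_assoc. apply le_div_mul; lra.
  - rewrite Rmult_assoc, (Rmult_comm e M), <- Rmult_assoc. apply le_div_mul; lra.
  - rewrite Rmult_assoc, (Rmult_comm e C), <- Rmult_assoc. apply le_div_mul; lra.
Qed.

Lemma Wx_bounds p e y : 0 < m1 p -> 0 < m2 p -> 0 < k1 p -> 0 < k2 p -> 0 < e -> e <= 1 ->
  4*e*m1 p <= k1 p -> 4*e*m2 p <= k2 p ->
  /4 * Rmin (Rmin (k1 p) (k2 p)) (Rmin (m1 p) (m2 p)) * sum_f_R0 (fun j => (y j)^2) 3 <= Wx p e y /\
  Wx p e y <= 3/4 * (k1 p + k2 p + m1 p + m2 p) * sum_f_R0 (fun j => (y j)^2) 3.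
Proof.
  intros Hm1 Hm2 Hk1 Hk2 He He1 G1 G2. unfold Wx.
  pose proof (osc_lower (m1 p) (k1 p) e (y 0%nat) (y 1%nat) Hm1 Hk1 He He1 G1) as L1.
  pose proof (osc_lower (m2 p) (k2 p) e (y 2%nat) (y 3%nat) Hm2 Hk2 He He1 G2) as L2.
  pose proof (osc_upper (m1 p) (k1 p) e (y 0%nat) (y 1%nat) Hm1 Hk1 He He1 G1) as U1.
  pose proof (osc_upper (m2 p) (k2 p) e (y 2%nat) (y 3%nat) Hm2 Hk2 He He1 G2) as U2.
  simpl.
  set (mu := Rmin (Rmin (k1 p) (k2 p)) (Rmin (m1 p) (m2 p))).
  assert (mu <= k1 p) by (unfold mu; pose proof (Rmin_l (Rmin (k1 p) (k2 p)) (Rmin (m1 p) (m2 p))); pose proof (Rmin_l (k1 p) (k2 p)); lra).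
  assert (mu <= k2 p) by (unfold mu; pose proof (Rmin_l (Rmin (k1 p) (k2 p)) (Rmin (m1 p) (m2 p))); pose proof (Rmin_r (k1 p) (k2 p)); lra).
  assert (mu <= m1 p) by (unfold mu; pose proof (Rmin_r (Rmin (k1 p) (k2 p)) (Rmin (m1 p) (m2 p))); pose proof (Rmin_l (m1 p) (m2 p)); lra).
  assert (mu <= m2 p) by (unfold mu; pose proof (Rmin_r (Rmin (k1 p) (k2 p)) (Rmin (m1 p) (m2 p))); pose proof (Rmin_r (m1 p) (m2 p)); lra).
  clearbody mu.
  set (a := y 0%nat) in *. set (b := y 1%nat) in *. set (c := y 2%nat) in *. set (d := y 3%nat) in *.
  assert (0 <= a*a) by apply Rle_0_sqr. assert (0 <= b*b) by apply Rle_0_sqr.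
  assert (0 <= c*c) by apply Rle_0_sqr. assert (0 <= d*d) by apply Rle_0_sqr.
  assert (mu * (a*a) <= k1 p * (a*a)) by (apply Rmult_le_compat_r; lra).
  assert (mu * (b*b) <= m1 p * (b*b)) by (apply Rmult_le_compat_r; lra).
  assert (mu * (c*c) <= k2 p * (c*c)) by (apply Rmult_le_compat_r; lra).
  assert (mu * (d*d) <= m2 p * (d*d)) by (apply Rmult_le_compat_r; lra).
  assert (k1 p * (a*a) <= (k1 p + k2 p + m1 p + m2 p) * (a*a)) by (apply Rmult_le_compat_r; lra).
  assert (m1 p * (b*b) <= (k1 p + k2 p + m1 p + m2 p) * (b*b)) by (apply Rmult_le_compat_r; lra).
  assert (k2 p * (c*c) <= (k1 p + k2 p + m1 p + m2 p) * (c*c)) by (apply Rmult_le_compat_r; lra).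
  assert (m2 p * (d*d) <= (k1 p + k2 p + m1 p + m2 p) * (d*d)) by (apply Rmult_le_compat_r; lra).
  split.
  - replace (/ 4 * mu * (0 + a ^ 2 + b ^ 2 + c ^ 2 + d ^ 2)) with
      (/4 * (mu*(a*a) + mu*(b*b) + mu*(c*c) + mu*(d*d))) by ring. lra.
  - replace (3 / 4 * (k1 p + k2 p + m1 p + m2 p) * (0 + a ^ 2 + b ^ 2 + c ^ 2 + d ^ 2)) with
      (3/4 * ((k1 p + k2 p + m1 p + m2 p)*(a*a) + (k1 p + k2 p + m1 p + m2 p)*(b*b)
        + (k1 p + k2 p + m1 p + m2 p)*(c*c) + (k1 p + k2 p + m1 p + m2 p)*(d*d))) by ring. lra.
Qed.

Theorem mainTheorem11 (m1 m2 c1 c2 k1 k2 : R) :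
  0 < m1 -> 0 < m2 -> 0 < c1 -> 0 < c2 -> 0 < k1 -> 0 < k2 ->
  GUES (mkParams m1 m2 c1 c2 k1 k2).
Proof.
  intros Hm1 Hm2 Hc1 Hc2 Hk1 Hk2.
  set (p := mkParams m1 m2 c1 c2 k1 k2).
  destruct (good_bound m1 c1 k1) as [b1 [Hb1 G1]]; try lra.
  destruct (good_bound m2 c2 k2) as [b2 [Hb2 G2]]; try lra.
  destruct (good_bound (m1+m2) (c1+c2) (k1+k2)) as [b3 [Hb3 G3]]; try lra.
  set (e := Rmin 1 (Rmin b1 (Rmin b2 b3))).
  assert (He : 0 < e) by (unfold e; repeat apply Rmin_pos; lra).
  assert (He1 : e <= 1) by apply Rmin_l.
  assert (Hr1 : Rmin b1 (Rmin b2 b3) <= b1) by apply Rmin_l.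
  assert (Hr2 : Rmin b1 (Rmin b2 b3) <= Rmin b2 b3) by apply Rmin_r.
  assert (Hr3 : Rmin b2 b3 <= b2) by apply Rmin_l.
  assert (Hr4 : Rmin b2 b3 <= b3) by apply Rmin_r.
  assert (He0 : e <= Rmin b1 (Rmin b2 b3)) by apply Rmin_r.
  specialize (G1 e ltac:(lra)). specialize (G2 e ltac:(lra)). specialize (G3 e ltac:(lra)).
  clearbody e.
  set (mu := Rmin (Rmin k1 k2) (Rmin m1 m2)).
  assert (Hmu : 0 < mu) by (unfold mu; repeat apply Rmin_pos; lra).
  set (Mx := k1 + k2 + m1 + m2).
  assert (HMx : 0 < Mx) by (unfold Mx; lra).
  exists (sqrt (3 * Mx / mu)), (e/4). split.
  { apply sqrt_lt_R0. apply Rdiv_lt_0_compat; lra. }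
  split; [lra|].
  intros sigma Hpc t0 x Hsol t Ht.
  set (F := fun s => exp (e/2*(s-t0)) * Wx p e (x s)).
  destruct Hsol as [S0 [S1 S2]] eqn:Hsol'. clear Hsol'.
  assert (Hr' : forall u, t0 <= u -> nlim (Nr u) F (F u)).
  { intros u Hu. unfold F. apply F_lim; [apply Nr_mono| apply Nr_ball|].
    intros k Hk.
    destruct (Req_dec u t0) as [->|Hne]; [apply S0; auto|].
    destruct (classic (sig_cont_at sigma u)) as [Hc|Hc].
    - destruct (S1 u ltac:(lra) Hc) as [dx [Hdx _]].
      apply (nlim_cont _ (fun s => x s k)); [apply Nr_ball|].
      apply derivable_continuous_pt. exists (dx k). apply Hdx; auto.
    - destruct (S2 u ltac:(lra) Hc) as [d [i [j [xm [_ [_ [_ [_ [Hrr _]]]]]]]]].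
      apply Hrr; auto. }
  assert (Hl' : forall u, t0 < u -> exists L, nlim (Nl u) F L /\ F u <= L).
  { intros u Hu.
    destruct (classic (sig_cont_at sigma u)) as [Hc|Hc].
    - exists (F u). split; [|lra]. unfold F. apply F_lim; [apply Nl_mono| apply Nl_ball|].
      intros k Hk.
      destruct (S1 u ltac:(lra) Hc) as [dx [Hdx _]].
      apply (nlim_cont _ (fun s => x s k)); [apply Nl_ball|].
      apply derivable_continuous_pt. exists (dx k). apply Hdx; auto.
    - destruct (S2 u ltac:(lra) Hc) as [d [i [j [xm [_ [_ [_ [Hlm [_ Hsw]]]]]]]]].
      exists (exp (e/2*(u-t0)) * Wx p e xm). split.
      + apply F_lim; [apply Nl_mono| apply Nl_ball|]. intros k Hk. apply Hlm; auto.
      + unfold F. apply Rmult_le_compat_l; [left; apply exp_pos|].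
        apply (jump_W p e i j); auto. }
  assert (Hd' : forall u, t0 < u -> sig_cont_at sigma u ->
            exists df, derivable_pt_lim F u df /\ df <= 0).
  { intros u Hu Hc. unfold F. apply deriv_point with sigma; auto. }
  assert (HF : F t <= F t0).
  { destruct (Req_dec t t0) as [->|Hne]; [lra|].
    destruct (Hpc t0 t) as [l Hl].
    apply (mono_list (sig_cont_at sigma) F t0 Hr' Hl' Hd' (length l) l (le_n _) t0 t); try lra.
    intros u Hu Hn. apply Hl; [lra|auto]. }
  unfold F in HF. rewrite Rminus_diag, Rmult_0_r, exp_0, Rmult_1_l in HF.
  destruct (Wx_bounds p e (x t)) as [Lt _]; auto; try (simpl; lra); try apply G1; try apply G2.
  destruct (Wx_bounds p e (x t0)) as [_ U0]; auto; try (simpl; lra); try apply G1; try apply G2.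
  set (St := sum_f_R0 (fun j => x t j ^ 2) 3) in *.
  set (Z0 := sum_f_R0 (fun j => x t0 j ^ 2) 3) in *.
  change (Defs.k1 p) with k1 in Lt, U0. change (Defs.k2 p) with k2 in Lt, U0.
  change (Defs.m1 p) with m1 in Lt, U0. change (Defs.m2 p) with m2 in Lt, U0. fold mu in Lt.
  assert (HSt : 0 <= St) by (unfold St; simpl; repeat apply Rplus_le_le_0_compat; try lra; apply pow2_ge_0).
  assert (HZ0 : 0 <= Z0) by (unfold Z0; simpl; repeat apply Rplus_le_le_0_compat; try lra; apply pow2_ge_0).
  set (D := t - t0) in *.
  set (X := exp (- (e/2) * D)).
  assert (HX : 0 < X) by apply exp_pos.
  assert (HXX : X * exp (e/2 * D) = 1).
  { unfold X. rewrite <- exp_plus. replace (- (e / 2) * D + e / 2 * D) with 0 by ring. apply exp_0. }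
  assert (HE : exp (- (e/4) * D) * exp (- (e/4) * D) = X).
  { unfold X. rewrite <- exp_plus. f_equal. field. }
  assert (W1 : Wx p e (x t) <= X * Wx p e (x t0)).
  { apply (Rmult_le_compat_l X) in HF; [|lra].
    rewrite <- Rmult_assoc, HXX, Rmult_1_l in HF. exact HF. }
  assert (W2 : X * Wx p e (x t0) <= X * (3 / 4 * (k1 + k2 + m1 + m2) * Z0)).
  { apply Rmult_le_compat_l; lra. }
  fold Mx in W2.
  assert (Key : St <= 3 * Mx / mu * (exp (- (e/4) * D) * exp (- (e/4) * D)) * Z0).
  { rewrite HE. apply (Rmult_le_reg_l mu); [lra|].
    replace (mu * (3 * Mx / mu * X * Z0)) with (3 * (X * Mx * Z0)) by (field; lra).
    lra. }
  unfold vnorm. fold St Z0.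
  assert (HEp : 0 <= exp (- (e/4) * D)) by (left; apply exp_pos).
  rewrite <- (sqrt_square (exp (- (e/4) * D))) by auto.
  rewrite <- sqrt_mult_alt by (apply Rlt_le, Rdiv_lt_0_compat; lra).
  rewrite <- sqrt_mult_alt.
  - apply sqrt_le_1_alt. exact Key.
  - apply Rmult_le_pos; [apply Rlt_le, Rdiv_lt_0_compat; lra| apply Rmult_le_pos; auto].
Qed.
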